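(* Let $(\Gamma,M)$ be an E-GCM graph and let $(\Gamma',M')$ be an OA-connected component of $(\Gamma,M)$ whose nodes are indexed by $J\subseteq I_n$. The following are equivalent: (1) $(\Gamma',M')$ is unital OA-cyclic; (2) $|\{K\alpha_x:K\in\mathbb{R}\}\cap\Phi_M^+|<\infty$ for some $x\in J$; (3) $|\{K\alpha_x:K\in\mathbb{R}\}\cap\Phi_M^+|<\infty$ for all $x\in J$. Moreover, in these cases $|\{K\alpha_x:K\in\mathbb{R}\}\cap\Phi_M^+|=|\{K\alpha_y:K\in\mathbb{R}\}\cap\Phi_M^+|$ for all $x,y\in J$.
   Context: E-GCM $M=(M_{ij})_{i,j\in I_n}$: real, $M_{ii}=2$, $M_{ij}\le0$ for $i\ne j$, $M_{ij}\neq0\iff M_{ji}\ne0$, nonzero $M_{ij}M_{ji}$ either $\ge4$ or $=4\cos^2(\pi/m)$ with $m\ge3$ integer. E-GCM graph: nodes $\gamma_i$, adjacent iff $M_{ij}\ne0$. Coxeter group $W$: generators $s_i$, $s_i^2=e$, $(s_is_j)^{m_{ij}}=e$ where $m_{ij}=k$ if $M_{ij}M_{ji}=4\cos^2(\pi/k)$ ($k\ge 2$ integer), $m_{ij}=\infty$ if $M_{ij}M_{ji}\ge4$. $W$ acts on the real vector space $V$ with basis $(\alpha_i)$ by $s_i.\alpha_j=\alpha_j-M_{ij}\alpha_i$; $\Phi_M=\{w.\alpha_i\}$, $\Phi_M^+$ = roots with all coefficients $\ge0$. $\gamma_i,\gamma_j$ are odd-adjacent if $m_{ij}$ is odd; then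 $K_{ji}:=-M_{ji}/(2\cos(\pi/m_{ij}))$. An OA-path is a sequence $\mathcal P=[\gamma_{i_0},\dots,\gamma_{i_p}]$ ($p\ge 0$) with consecutive nodes odd-adjacent; $\Pi_{\mathcal P}:=K_{i_pi_{p-1}}\cdots K_{i_1i_0}$ ($=1$ for $p=0$). It is an OA-cycle if $\gamma_{i_p}=\gamma_{i_0}$. An OA-connected component is the induced subgraph (with the corresponding submatrix of $M$) on a maximal set of nodes any two of which can be joined by an OA-path. It is unital OA-cyclic if $\Pi_{\mathcal C}=1$ for every OA-cycle $\mathcal C$ in it. *)

(* Defs.v *)
From HB Require Import structures.
From mathcomp Require Import all_boot all_order all_algebra.
From mathcomp Require Import all_classical all_reals all_analysis.
Set Implicit Arguments. Unset Strict Implicit. Unset Printing Implicit Defensive.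
Import Order.TTheory GRing.Theory Num.Theory.
Local Open Scope ring_scope.
Local Open Scope classical_set_scope.

Section EGCM.
Variables (R : realType) (n : nat).
Implicit Types (M : 'M[R]_n) (i j x y : 'I_n).

Definition egcm M : Prop :=
  [/\ (forall i, M i i = 2),
      (forall i j, i != j -> M i j <= 0),
      (forall i j, M i j != 0 <-> M j i != 0)
    & (forall i j, M i j * M j i != 0 ->
         4 <= M i j * M j i \/
         exists m : nat, (3 <= m)%N /\ M i j * M j i = 4 * cos (pi / m%:R) ^+ 2)].

Definition coxm_pred M i j (k : nat) : Prop :=
  (2 <= k)%N /\ M i j * M j i = 4 * cos (pi / k%:R) ^+ 2.

(* m_ij; the value 0 encodes m_ij = infinity *)
Definition coxm M i j : nat :=
  match pselect (exists k, coxm_pred M i j k) with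
  | left h => projT1 (cid h)
  | right _ => 0%N
  end.

(* odd adjacency: m_ij odd (infinity, encoded 0, is not odd) *)
Definition odd_adj M i j : bool := (i != j) && odd (coxm M i j).

Definition Kc M j i : R := - M j i / (2 * cos (pi / (coxm M i j)%:R)).

(* OA-path [x; s_1; ...; s_p]; its product Pi = K_{i_p i_{p-1}} ... K_{i_1 i_0} *)
Definition oa_path M x (s : seq 'I_n) : bool := path (odd_adj M) x s.
Definition oa_prod M x (s : seq 'I_n) : R :=
  \prod_(pr <- zip (x :: s) s) Kc M pr.2 pr.1.

Definition oa_connected M x y : Prop :=
  exists s, oa_path M x s /\ last x s = y.

Definition oa_pairwise M (J : {set 'I_n}) : Prop :=
  forall x y, x \in J -> y \in J -> oa_connected M x y.
Definition oa_component M (J : {set 'I_n}) : Prop :=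
  [/\ J != finset.set0, oa_pairwise M J &
      forall J' : {set 'I_n}, J \subset J' -> oa_pairwise M J' -> J' = J].

Definition unital_oa_cyclic M (J : {set 'I_n}) : Prop :=
  forall x s, oa_path M x s -> last x s = x -> all (mem J) (x :: s) ->
    oa_prod M x s = 1.

(* simple root alpha_i and simple reflection s_i on V = R^n (row vectors):
   s_i . alpha_j = alpha_j - M_ij alpha_i, extended linearly *)
Definition alpha i : 'rV[R]_n := delta_mx 0 i.
Definition refl M i (v : 'rV[R]_n) : 'rV[R]_n :=
  v - (\sum_j v 0 j * M i j) *: alpha i.

(* Phi_M = { w . alpha_i }, w ranging over words in the generators s_i *)
Definition roots M : set 'rV[R]_n :=
  [set v | exists (w : seq 'I_n) i, v = foldr (refl M) (alpha i) w].
Definition pos_roots M : set 'rV[R]_n :=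
  [set v | roots M v /\ forall j, 0 <= v 0 j].

Definition ray_roots M x : set 'rV[R]_n :=
  [set K *: alpha x | K in [set: R]] `&` pos_roots M.

End EGCM.

(* Main.v *)
Require Import Defs.
From HB Require Import structures.
From mathcomp Require Import all_boot all_order all_algebra.
From mathcomp Require Import all_classical all_reals all_analysis.
From mathcomp Require Import ring lra zify.
Set Implicit Arguments. Unset Strict Implicit. Unset Printing Implicit Defensive.
Import Order.TTheory GRing.Theory Num.Theory.
Local Open Scope ring_scope.
Local Open Scope classical_set_scope.
Section Basics.
Variables (R : realType) (n : nat) (M : 'M[R]_n).

Definition act (w : seq 'I_n) (v : 'rV[R]_n) := foldr (refl M) v w.
Definition fM (i : 'I_n) (v : 'rV[R]_n) : R := \sum_j v 0 j * M i j.
Local Notation al := (alpha R).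

Lemma alphaE (i j : 'I_n) : al i 0 j = (i == j)%:R :> R.
Proof. by rewrite /alpha mxE eqxx /= eq_sym. Qed.

Lemma reflE i v : refl M i v = v - fM i v *: al i.
Proof. by []. Qed.

Lemma fM_lin i a u v : fM i (a *: u + v) = a * fM i u + fM i v.
Proof.
rewrite /fM mulr_sumr -big_split /=; apply: eq_bigr => j _.
by rewrite !mxE mulrDl mulrA.
Qed.

Lemma fM0 i : fM i 0 = 0.
Proof. by rewrite /fM big1 // => j _; rewrite mxE mul0r. Qed.

Lemma fMZ i a u : fM i (a *: u) = a * fM i u.
Proof. by have := fM_lin i a u 0; rewrite addr0 fM0 addr0. Qed.

Lemma fMD i u v : fM i (u + v) = fM i u + fM i v.
Proof. by have := fM_lin i 1 u v; rewrite scale1r mul1r. Qed.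

Lemma fMB i u v : fM i (u - v) = fM i u - fM i v.
Proof. by rewrite -scaleN1r fMD fMZ mulN1r. Qed.

Lemma fM_alpha i j : fM i (al j) = M i j.
Proof.
rewrite /fM (bigD1 j) //= big1 ?addr0; first by rewrite alphaE eqxx mul1r.
by move=> k /negPf kj; rewrite alphaE eq_sym kj mul0r.
Qed.

Lemma refl_lin i a u v : refl M i (a *: u + v) = a *: refl M i u + refl M i v.
Proof.
rewrite !reflE fM_lin scalerDl scalerBr scalerA; apply/rowP => k; rewrite !mxE; ring.
Qed.

Lemma act_lin w a u v : act w (a *: u + v) = a *: act w u + act w v.
Proof. by elim: w => //= i w IH; rewrite IH refl_lin. Qed.

Lemma act0 w : act w 0 = 0.
Proof.
by elim: w => //= i w ->; rewrite reflE fM0 scale0r subr0.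
Qed.

Lemma actZ w a u : act w (a *: u) = a *: act w u.
Proof. by have := act_lin w a u 0; rewrite addr0 act0 addr0. Qed.

Lemma actD w u v : act w (u + v) = act w u + act w v.
Proof. by have := act_lin w 1 u v; rewrite !scale1r. Qed.

Lemma act_cat w1 w2 v : act (w1 ++ w2) v = act w1 (act w2 v).
Proof. by rewrite /act foldr_cat. Qed.

Lemma act_rcons w i v : act (rcons w i) v = act w (refl M i v).
Proof. by rewrite -cats1 act_cat. Qed.

Lemma act_cons i w v : act (i :: w) v = refl M i (act w v).
Proof. by []. Qed.

Hypothesis Mdiag : forall i, M i i = 2.

Lemma reflK i : involutive (refl M i).
Proof.
move=> v; rewrite [in LHS]reflE reflE fMB fMZ fM_alpha Mdiag.
apply/rowP => k; rewrite !mxE; ring.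
Qed.

Lemma act_revK w v : act (rev w) (act w v) = v.
Proof.
elim: w v => //= i w IH v; rewrite rev_cons act_rcons reflK; exact: IH.
Qed.

Lemma act_Krev w v : act w (act (rev w) v) = v.
Proof. by have := act_revK (rev w) v; rewrite revK. Qed.

Lemma act_inj w : injective (act w).
Proof. by move=> u v /(congr1 (act (rev w))); rewrite !act_revK. Qed.

Lemma alpha_neq0 (i : 'I_n) : al i != 0.
Proof. by apply/eqP => /rowP /(_ i); rewrite alphaE eqxx !mxE; apply/eqP; rewrite oner_eq0. Qed.

Lemma act_neq0 w v : v != 0 -> act w v != 0.
Proof. by apply: contraNneq => h; rewrite -(act_revK w v) h act0. Qed.

Lemma refl_s2 s t p q : s != t ->
  refl M s (p *: al s + q *: al t) = (- p + (- M s t) * q) *: al s + q *: al t.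
Proof.
move=> st; rewrite reflE fMD !fMZ !fM_alpha Mdiag.
apply/rowP => k; rewrite !mxE; ring.
Qed.

Lemma refl_t2 s t p q : s != t ->
  refl M t (p *: al s + q *: al t) = p *: al s + (- q + (- M t s) * p) *: al t.
Proof.
move=> st; rewrite reflE fMD !fMZ !fM_alpha Mdiag.
apply/rowP => k; rewrite !mxE; ring.
Qed.

End Basics.

Fixpoint alt (T : Type) (a b : T) k : seq T :=
  match k with 0 => [::] | k'.+1 => (if odd k' then a else b) :: alt a b k' end.

Fixpoint Vp (R : pzRingType) (x : R) (j : nat) : R * R :=
  match j with
  | 0 => (0, 1)
  | j'.+1 => let pq := Vp x j' in (pq.2, (if odd j' then x else 1) * pq.2 - pq.1)
  end.
Definition V (R : pzRingType) (x : R) j := (Vp x j).1.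

Lemma V0 (R : pzRingType) (x : R) : V x 0 = 0. Proof. by []. Qed.
Lemma V1 (R : pzRingType) (x : R) : V x 1 = 1. Proof. by []. Qed.
Lemma V_rec (R : pzRingType) (x : R) j :
  V x j.+2 = (if odd j then x else 1) * V x j.+1 - V x j.
Proof. by []. Qed.

Section Beta.
Variables (R : realType) (n : nat) (M : 'M[R]_n).
Hypothesis Mdiag : forall i, M i i = 2.
Local Notation al := (alpha R).

Lemma beta_formula s t k : s != t ->
  let a := - M s t in let b := - M t s in let x := a * b in
  act M (alt s t k) (al s) =
  if odd k then V x k *: al s + (b * V x k.+1) *: al t
  else V x k.+1 *: al s + (b * V x k) *: al t.
Proof.
move=> st a b x; elim: k => [|k IH].
  by rewrite /= V1 V0 mulr0 scale0r addr0 scale1r.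
rewrite act_cons IH /=; case ok: (odd k) => /=.
  rewrite refl_s2 //; congr (_ *: _ + _ *: _); rewrite V_rec ok /x /a /b; ring.
rewrite refl_t2 //; congr (_ *: _ + _ *: _); rewrite V_rec ok /b; ring.
Qed.

End Beta.

Section Trig.
Variable R : realType.

Definition U (T : R) j := V (T ^+ 2) j * (if odd j then 1 else T).

Lemma U_rec T j : U T j.+2 = T * U T j.+1 - U T j.
Proof.
rewrite /U V_rec /=; case: (odd j) => /=; ring.
Qed.

Lemma U0 T : U T 0 = 0. Proof. by rewrite /U V0 mul0r. Qed.
Lemma U1 T : U T 1 = 1. Proof. by rewrite /U V1 mulr1. Qed.

Lemma sin_rec (y th : R) : sin (y + th) = 2 * cos th * sin y - sin (y - th).
Proof. rewrite sinD sinB; ring. Qed.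

Lemma U_sin th j : U (2 * cos th) j * sin th = sin (j%:R * th).
Proof.
suff : U (2 * cos th) j * sin th = sin (j%:R * th) /\
       U (2 * cos th) j.+1 * sin th = sin (j.+1%:R * th) by case.
elim: j => [|j [IH1 IH2]].
  by split; [rewrite U0 !mul0r sin0 | rewrite U1 !mul1r].
split=> //; rewrite U_rec mulrBl -(mulrA (2 * cos th)) IH2 IH1.
have -> : j.+2%:R * th = j.+1%:R * th + th by rewrite -addn1 natrD mulrDl mul1r.
rewrite sin_rec; congr (_ - sin _).
by rewrite -addn1 natrD mulrDl mul1r addrK.
Qed.

Lemma U_ge T : 2 <= T -> forall j, U T j <= U T j.+1 /\ 1 <= U T j.+1.
Proof.
move=> T2; elim=> [|j [IH1 IH2]].
  by rewrite U0 U1 ler01 lexx.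
rewrite U_rec; split; last first.
  have : U T j.+1 * 2 <= U T j.+1 * T by rewrite ler_wpM2l // (le_trans ler01).
  lra.
have : U T j.+1 * 2 <= U T j.+1 * T by rewrite ler_wpM2l // (le_trans ler01).
lra.
Qed.

Lemma V_pos_inf (x : R) j : 4 <= x -> (0 < j)%N -> 0 < V x j.
Proof.
move=> x4 j0.
have xe : x = Num.sqrt x ^+ 2 by rewrite sqr_sqrtr // (le_trans _ x4) //; lra.
have sx : 2 <= Num.sqrt x.
  have s0 := sqrtr_ge0 x; rewrite leNgt; apply/negP => h.
  move: x4; rewrite xe expr2; nra.
case: j j0 => // j _.
have [_ h] := U_ge sx j.
move: h; rewrite /U -xe; case: (odd j.+1) => h.
  by rewrite mulr1 in h; lra.
have : 0 < V x j.+1 * Num.sqrt x by lra.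
by rewrite pmulr_lgt0 // (lt_le_trans _ sx).
Qed.

Section Finite.
Variable m : nat.
Hypothesis m3 : (3 <= m)%N.
Let th := pi / m%:R : R.
Let c := cos th.

Lemma m_gt0 : (0 : R) < m%:R.
Proof. by rewrite ltr0n; apply: leq_trans m3. Qed.

Lemma th_gt0 : 0 < th.
Proof. by rewrite divr_gt0 ?pi_gt0 ?m_gt0. Qed.

Lemma th_lt : th < pi / 2.
Proof.
rewrite /th ltr_pM2l ?pi_gt0 // ltf_pV2 ?posrE ?m_gt0 //.
by rewrite ltr_nat; apply: leq_trans m3.
Qed.

Lemma c_gt0 : 0 < c.
Proof.
apply: cos_gt0_pihalf; have := th_gt0; have := th_lt; have := pi_gt0 R. 
move=> *; apply/andP; split; lra.
Qed.

Lemma c_lt1 : c ^+ 2 < 1.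
Proof.
rewrite /c cos2sin2.
have : 0 < sin th.
  apply: sin_gt0_pi; have := th_gt0; have := th_lt; have := pi_gt0 R.
  move=> *; apply/andP; split; lra.
move=> h; have : 0 < sin th ^+ 2 by rewrite exprn_gt0.
lra.
Qed.

Lemma sin_th_gt0 : 0 < sin th.
Proof.
apply: sin_gt0_pi; have := th_gt0; have := th_lt; have := pi_gt0 R.
move=> *; apply/andP; split; lra.
Qed.

Lemma mth : m%:R * th = pi.
Proof. by rewrite /th mulrC -mulrA mulVf ?mulr1 // gt_eqF ?m_gt0. Qed.

Lemma Vm_fin : V (4 * c ^+ 2) m = 0.
Proof.
have := U_sin th m; rewrite mth sinpi /U.
have -> : (2 * cos th) ^+ 2 = 4 * c ^+ 2 by rewrite exprMn /c; congr (_ * _); rewrite expr2; ring.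
move/eqP; rewrite !mulf_eq0 (gt_eqF sin_th_gt0) orbF.
have cg := c_gt0; have : (if odd m then 1 else 2 * cos th) != 0.
  by case: (odd m); rewrite ?oner_eq0 // mulf_neq0 // gt_eqF.
by move/negPf => ->; rewrite orbF => /eqP.
Qed.

Lemma Vpos_fin j : (0 < j)%N -> (j < m)%N -> 0 < V (4 * c ^+ 2) j.
Proof.
move=> j0 jm.
have s : 0 < sin (j%:R * th).
  apply: sin_gt0_pi; apply/andP; split.
    by rewrite mulr_gt0 ?th_gt0 // ltr0n.
  rewrite -mth ltr_pM2r ?th_gt0 // ltr_nat //.
have := U_sin th j; rewrite /U.
have -> : (2 * cos th) ^+ 2 = 4 * c ^+ 2 by rewrite exprMn /c; congr (_ * _); rewrite expr2; ring.
move=> e; rewrite -e in s.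
have cg := c_gt0; have sg := sin_th_gt0.
move: s; case: (odd j) => /=.
  by rewrite mulr1 pmulr_lgt0.
by rewrite pmulr_lgt0 // pmulr_lgt0 // mulr_gt0 // /c; lra.
Qed.

Lemma Vm1_fin : V (4 * c ^+ 2) m.-1 * (if odd m.-1 then 1 else 2 * c) = 1.
Proof.
have := U_sin th m.-1; rewrite /U.
have -> : (2 * cos th) ^+ 2 = 4 * c ^+ 2 by rewrite exprMn /c; congr (_ * _); rewrite expr2; ring.
have -> : m.-1%:R * th = pi - th.
  have e : m = m.-1.+1 by rewrite prednK //; apply: leq_trans m3.
  by rewrite -mth {2}e -addn1 natrD mulrDl mul1r addrK.
rewrite sinB sinpi cospi mul0r sub0r mulN1r opprK.
rewrite -/c -{2}[sin th]mul1r => /(mulIf (lt0r_neq0 sin_th_gt0)).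
by [].
Qed.

End Finite.
End Trig.

Section Coxm.
Variables (R : realType) (n : nat) (M : 'M[R]_n).
Hypothesis HM : egcm M.

Lemma coxmP i j : (coxm M i j = 0%N /\ ~ (exists k, coxm_pred M i j k)) \/
  coxm_pred M i j (coxm M i j).
Proof.
rewrite /coxm; case: (pselect (exists k, coxm_pred M i j k)) => h.
  by right; exact: (projT2 (cid h)).
by left.
Qed.

Lemma cos_pihalf' : cos (pi / 2%:R) = 0 :> R.
Proof. exact: cos_pihalf. Qed.

Lemma coxm_cases i j : i != j ->
  [\/ (coxm M i j = 0%N /\ 4 <= M i j * M j i /\ M i j < 0 /\ M j i < 0),
      (coxm M i j = 2%N /\ M i j = 0 /\ M j i = 0) |
      ((3 <= coxm M i j)%N /\ M i j * M j i = 4 * cos (pi / (coxm M i j)%:R) ^+ 2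
        /\ M i j < 0 /\ M j i < 0)].
Proof.
move=> ij; case: HM => Hd Hneg Hiff Hprod.
have ji : j != i by rewrite eq_sym.
have nij := Hneg _ _ ij; have nji := Hneg _ _ ji.
case: (coxmP i j) => [[c0 nk]|[c2 cp]].
  have p0 : M i j * M j i != 0.
    apply/negP => /eqP p0; apply: nk; exists 2%N; split => //.
    by rewrite cos_pihalf' expr0n mulr0.
  case: (Hprod _ _ p0) => [p4|[m [m3 pm]]]; last first.
    by exfalso; apply: nk; exists m; split => //; apply: leq_trans m3.
  have a0 : M i j != 0 by apply: contraNneq p0 => ->; rewrite mul0r.
  have b0 : M j i != 0 by apply: contraNneq p0 => ->; rewrite mulr0.
  by constructor 1; split => //; split => //; split; rewrite lt_neqAle ?a0 ?b0.
move: c2; rewrite leq_eqVlt => /orP [/eqP c2|c3].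
  constructor 2; rewrite -c2 in cp *; split => //.
  move: cp; rewrite cos_pihalf' expr0n mulr0 => /eqP; rewrite mulf_eq0 => /orP [/eqP h|/eqP h].
    split => //; apply/eqP/negPn/negP => hne; move: (proj1 (Hiff j i) hne); by rewrite h eqxx.
  split => //; apply/eqP/negPn/negP => hne; move: (proj1 (Hiff i j) hne); by rewrite h eqxx.
constructor 3; split => //; split => //.
have cg := @c_gt0 R _ c3.
have p0 : M i j * M j i != 0 by rewrite cp mulf_neq0 // expf_neq0 // gt_eqF.
have a0 : M i j != 0 by apply: contraNneq p0 => ->; rewrite mul0r.
have b0 : M j i != 0 by apply: contraNneq p0 => ->; rewrite mulr0.
by split; rewrite lt_neqAle ?a0 ?b0.
Qed.

Section Dihedral.
Variables s t : 'I_n.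
Hypothesis st : s != t.
Let m := coxm M s t.
Let a := - M s t.
Let b := - M t s.
Let x := a * b.

Lemma x_eq : x = M s t * M t s.
Proof. by rewrite /x /a /b mulrNN. Qed.

Lemma odd_pred k : (0 < k)%N -> odd k.-1 = ~~ odd k.
Proof. by case: k => // k _; rewrite /= negbK. Qed.

Lemma V2 (y : R) : V y 2 = 1.
Proof. by rewrite V_rec /= V1 V0 mul1r subr0. Qed.

Lemma a_ge0 : 0 <= a.
Proof. by case: HM => _ Hneg _ _; rewrite /a oppr_ge0 Hneg. Qed.

Lemma b_ge0 : 0 <= b.
Proof. by case: HM => _ Hneg _ _; rewrite /b oppr_ge0 Hneg // eq_sym. Qed.

Lemma Vnn j : (m = 0%N \/ (j <= m)%N) -> 0 <= V x j.
Proof.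
move=> hj; case: (coxm_cases st) => [[c0 [p4 _]]|[c2 [h1 h2]]|[c3 [pe _]]].
- case: j hj => [|j] _; first by rewrite V0.
  by apply/ltW/V_pos_inf => //; rewrite x_eq.
- case: hj => [|]; rewrite /m c2 //.
  by case: j => [|[|[|]]] //= _; rewrite ?V0 ?V1 ?V2 ?ler01.
- case: hj => [c0|jm]; first by move: c3; rewrite -/m c0.
  rewrite x_eq pe; case: j jm => [|j] jm; first by rewrite V0.
  move: jm; rewrite leq_eqVlt => /orP [/eqP e|lt].
    by rewrite e Vm_fin.
  by apply/ltW/Vpos_fin.
Qed.

Lemma Vpos j : (0 < j)%N -> (m = 0%N \/ (j < m)%N) -> 0 < V x j.
Proof.
move=> j0 hj; case: (coxm_cases st) => [[c0 [p4 _]]|[c2 [h1 h2]]|[c3 [pe _]]].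
- by apply/V_pos_inf => //; rewrite x_eq.
- case: hj => [|]; rewrite /m c2 //.
  by case: j j0 => [|[|]] //= _ _; rewrite V1 ltr01.
- case: hj => [c0|jm]; first by move: c3; rewrite -/m c0.
  by rewrite x_eq pe; apply/Vpos_fin.
Qed.

Lemma b_gt0 : m != 2%N -> 0 < b.
Proof.
move=> m2; case: (coxm_cases st) => [[c0 [p4 [_ h]]]|[c2 _]|[c3 [pe [_ h]]]].
- by rewrite /b oppr_gt0.
- by move: m2; rewrite /m c2.
- by rewrite /b oppr_gt0.
Qed.

Lemma Vm_zero : (2 <= m)%N ->
  [/\ a * V x m = 0, b * V x m = 0, x * V x m = 0 & (odd m -> V x m = 0)].
Proof.
move=> m2; case: (coxm_cases st) => [[c0 _]|[c2 [h1 h2]]|[c3 [pe _]]].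
- by move: m2; rewrite /m c0.
- by rewrite /m c2; split => //; rewrite /x /a /b h1 h2 oppr0 !mul0r.
- by rewrite x_eq pe -/m Vm_fin // !mulr0; split.
Qed.

Lemma Vm1_even : (2 <= m)%N -> ~~ odd m -> V x m.-1 = 1.
Proof.
move=> m2 om; case: (coxm_cases st) => [[c0 _]|[c2 [h1 h2]]|[c3 [pe _]]].
- by move: m2; rewrite /m c0.
- by rewrite /m c2 V1.
- have := @Vm1_fin R _ c3; rewrite -/m.
  have m0 : (0 < m)%N by apply: (leq_trans _ c3).
  rewrite odd_pred // om.
  by rewrite mulr1 x_eq pe.
Qed.

Lemma Vm1_odd : odd m -> b * V x m.-1 = Kc M t s.
Proof.
move=> om; case: (coxm_cases st) => [[c0 _]|[c2 [h1 h2]]|[c3 [pe _]]].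
- by move: om; rewrite /m c0.
- by move: om; rewrite /m c2.
- have := @Vm1_fin R _ c3; rewrite -/m.
  have m0 : (0 < m)%N by apply: (leq_trans _ c3).
  rewrite odd_pred // om.
  rewrite x_eq pe /Kc -/m -/b => e.
  have cg := @c_gt0 R _ c3.
  have c0 : 2 * cos (pi / m%:R) != 0 :> R.
    by apply: mulf_neq0; [rewrite pnatr_eq0 | exact: lt0r_neq0].
  move: e; rewrite /= => e.
  have -> : V (4 * cos (pi / m%:R) ^+ 2) m.-1 = (2 * cos (pi / m%:R))^-1 :> R.
    by apply: (mulIf c0); rewrite e mulVf.
  by [].
Qed.

Lemma x_neq4 : (2 <= m)%N -> x != 4.
Proof.
move=> m2; case: (coxm_cases st) => [[c0 _]|[c2 [h1 h2]]|[c3 [pe _]]].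
- by move: m2; rewrite /m c0.
- by rewrite x_eq h1 mul0r eq_sym pnatr_eq0.
- rewrite x_eq pe; have := @c_lt1 R _ c3; rewrite -/m => h.
  by apply/negP => /eqP e; lra.
Qed.

End Dihedral.
End Coxm.

Lemma alt_rcons (T : Type) k (a b : T) : alt a b k.+1 = rcons (alt b a k) b.
Proof.
elim: k a b => [//|k IH] a b.
change (alt a b k.+2) with ((if odd k.+1 then a else b) :: alt a b k.+1).
rewrite IH /=; by case: (odd k).
Qed.

Lemma size_alt (T : Type) (a b : T) k : size (alt a b k) = k.
Proof. by elim: k => //= k ->. Qed.

Lemma alt_split (T : Type) (a b : T) j k : exists p, alt a b (j + k) = p ++ alt a b k.
Proof.
elim: j => [|j [p IH]]; first by exists [::].
by exists ((if odd (j + k) then a else b) :: p); rewrite addSn /= IH.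
Qed.

Lemma alt_mem (T : eqType) (a b : T) k i : i \in alt a b k -> (i == a) || (i == b).
Proof.
elim: k => //= k IH; rewrite in_cons => /orP [/eqP ->|/IH //].
by case: (odd k); rewrite eqxx ?orbT.
Qed.

Section Braid.
Variables (R : realType) (n : nat) (M : 'M[R]_n).
Hypothesis HM : egcm M.
Local Notation al := (alpha R).
Local Notation act := (act M).

Lemma Mdiag : forall i, M i i = 2.
Proof. by case: HM. Qed.

Definition Iword (s t : 'I_n) (u : seq 'I_n) := all (fun i => (i == s) || (i == t)) u.

Lemma Iword_form s t u : Iword s t u -> exists c11 c12 c21 c22 : R, forall v,
  act u v = v - (c11 * fM M s v + c12 * fM M t v) *: al s
              - (c21 * fM M s v + c22 * fM M t v) *: al t.
Proof.
elim: u => [|i u IH].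
  by move=> _; exists 0, 0, 0, 0 => v; rewrite !mul0r !addr0 !scale0r !subr0.
rewrite /Iword /= => /andP [hi /IH [c11 [c12 [c21 [c22 E]]]]].
have fw : forall j v, fM M j (act u v) = fM M j v
   - (c11 * fM M s v + c12 * fM M t v) * M j s - (c21 * fM M s v + c22 * fM M t v) * M j t.
  by move=> j v; rewrite E !fMB !fMZ !fM_alpha.
case/orP: hi => /eqP ->.
  exists (c11 + (1 - c11 * M s s - c21 * M s t)), (c12 + (- c12 * M s s - c22 * M s t)), c21, c22.
  move=> v; rewrite reflE fw E; apply/rowP => k; rewrite !mxE; ring.
exists c11, c12, (c21 + (- c11 * M t s - c21 * M t t)), (c22 + (1 - c12 * M t s - c22 * M t t)).
move=> v; rewrite reflE fw E; apply/rowP => k; rewrite !mxE; ring.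
Qed.

Lemma Iword_ext s t u1 u2 : s != t -> M s t * M t s != 4 -> Iword s t u1 -> Iword s t u2 ->
  act u1 (al s) = act u2 (al s) -> act u1 (al t) = act u2 (al t) ->
  forall v, act u1 v = act u2 v.
Proof.
move=> st x4 /Iword_form [c11 [c12 [c21 [c22 E1]]]] /Iword_form [d11 [d12 [d21 [d22 E2]]]].
rewrite E1 E2 => hs; rewrite E1 E2 => ht v.
have key : forall p q : R, p * 2 + q * M t s = 0 -> p * M s t + q * 2 = 0 -> p = 0 /\ q = 0.
  move=> p q e1 e2.
  have : p * (4 - M s t * M t s) = 0.
    have -> : p * (4 - M s t * M t s) = 2 * (p * 2 + q * M t s) - M t s * (p * M s t + q * 2) by ring.
    by rewrite e1 e2 !mulr0 subr0.
  move/eqP; rewrite mulf_eq0 subr_eq0 [4 == _]eq_sym (negPf x4) orbF => /eqP p0.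
  split=> //; move: e2; rewrite p0 mul0r add0r => /eqP; rewrite mulf_eq0 => /orP [/eqP //|].
  by rewrite pnatr_eq0.
have ts : t != s by rewrite eq_sym.
move: (congr1 (fun w : 'rV[R]_n => w 0 s) hs) (congr1 (fun w : 'rV[R]_n => w 0 t) hs)
  (congr1 (fun w : 'rV[R]_n => w 0 s) ht) (congr1 (fun w : 'rV[R]_n => w 0 t) ht).
rewrite /= !mxE ?alphaE /= !eqxx ?(negPf st) ?(negPf ts) /= !fM_alpha !Mdiag.
move=> e1 e2 e3 e4.
have [h11 h12] : c11 - d11 = 0 /\ c12 - d12 = 0.
  apply: key.
    by move/esym/eqP: e1; rewrite -subr_eq0 => /eqP e1; rewrite -e1; ring.
  by move/esym/eqP: e3; rewrite -subr_eq0 => /eqP e3; rewrite -e3; ring.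
have [h21 h22] : c21 - d21 = 0 /\ c22 - d22 = 0.
  apply: key.
    by move/esym/eqP: e2; rewrite -subr_eq0 => /eqP e2; rewrite -e2; ring.
  by move/esym/eqP: e4; rewrite -subr_eq0 => /eqP e4; rewrite -e4; ring.
rewrite E1 E2.
move/eqP: h11; rewrite subr_eq0 => /eqP ->.
move/eqP: h12; rewrite subr_eq0 => /eqP ->.
move/eqP: h21; rewrite subr_eq0 => /eqP ->.
by move/eqP: h22; rewrite subr_eq0 => /eqP ->.
Qed.

Lemma refl_self i : refl M i (al i) = - al i.
Proof.
rewrite reflE fM_alpha Mdiag; apply/rowP => k; rewrite !mxE; ring.
Qed.

Lemma braid_half s t m : s != t -> (0 < m)%N ->
  let x := (- M s t) * (- M t s) in let b := - M t s in
  (odd m -> V x m = 0) -> (~~ odd m -> x * V x m = 0 /\ b * V x m = 0) ->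
  act (alt s t m) (al s) = act (alt t s m) (al s).
Proof.
move=> st m0 x b ho he.
have e : m = m.-1.+1 by rewrite prednK.
rewrite {2}e alt_rcons act_rcons refl_self -scaleN1r actZ.
have Vr : V x m.+1 = (if odd m.-1 then x else 1) * V x m - V x m.-1.
  by rewrite {1}e V_rec -e.
rewrite !(@beta_formula R n M Mdiag) //= -/x -/b.
rewrite odd_pred // Vr -e.
case om: (odd m) => /=.
  rewrite odd_pred // om /= (ho om) mul1r; apply/rowP => k; rewrite !mxE; ring.
have [h1 h2] := he (negbT om).
rewrite odd_pred // om /= h1; apply/rowP => k; rewrite !mxE.
rewrite h2; ring.
Qed.

Lemma braid s t : s != t -> (2 <= coxm M s t)%N ->
  forall v, act (alt s t (coxm M s t)) v = act (alt t s (coxm M s t)) v.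
Proof.
move=> st m2; have ts : t != s by rewrite eq_sym.
have [h1 h2 h3 h4] := Vm_zero HM st m2.
have m0 : (0 < coxm M s t)%N by apply: leq_trans m2.
apply: (Iword_ext st).
- by have := x_neq4 HM st m2; rewrite mulrNN.
- by apply/allP => i /alt_mem.
- by apply/allP => i /alt_mem; rewrite orbC.
- apply: braid_half => // om; split => //.
- symmetry; apply: braid_half => //.
  + by rewrite [- M t s * _]mulrC => /h4.
  + by move=> om; rewrite ![- M t s * _]mulrC; split; [exact: h3 | exact: h1].
Qed.

End Braid.

Lemma exists_min (P : nat -> Prop) : (exists k, P k) ->
  exists k, P k /\ forall j, P j -> (k <= j)%N.
Proof.
move=> [k Pk]; apply: contrapT => H.
elim/ltn_ind: k Pk => k IH Pk; apply: H; exists k; split => // j Pj.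
by rewrite leqNgt; apply/negP => jk; exact: (IH j jk Pj).
Qed.

Section Length.
Variables (R : realType) (n : nat) (M : 'M[R]_n).
Hypothesis HM : egcm M.
Local Notation al := (alpha R).
Local Notation act := (act M).
Let Md := Mdiag HM.

Definition equivw (w1 w2 : seq 'I_n) := forall v, act w1 v = act w2 v.
Definition reduced (w : seq 'I_n) := forall w', equivw w w' -> (size w <= size w')%N.
Definition Ireduced (s t : 'I_n) (u : seq 'I_n) :=
  forall u', Iword s t u' -> equivw u u' -> (size u <= size u')%N.
Definition posv (v : 'rV[R]_n) := forall j, 0 <= v 0 j.
Definition lenup (w : seq 'I_n) (s : 'I_n) := forall w', equivw (rcons w s) w' -> (size w <= size w')%N.

Lemma equivw_sym w1 w2 : equivw w1 w2 -> equivw w2 w1.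
Proof. by move=> h v; rewrite h. Qed.

Lemma equivw_trans w1 w2 w3 : equivw w1 w2 -> equivw w2 w3 -> equivw w1 w3.
Proof. by move=> h1 h2 v; rewrite h1 h2. Qed.

Lemma equivw_cat p1 p2 q1 q2 : equivw p1 p2 -> equivw q1 q2 -> equivw (p1 ++ q1) (p2 ++ q2).
Proof. by move=> h1 h2 v; rewrite !act_cat h1 h2. Qed.

Lemma equivw_rr w s : equivw (rcons (rcons w s) s) w.
Proof. by move=> v; rewrite !act_rcons reflK. Qed.

Lemma equivw_cc s w : equivw (s :: s :: w) w.
Proof. by move=> v; rewrite !act_cons reflK. Qed.

Lemma reduced_exists w : exists w', equivw w w' /\ reduced w'.
Proof.
have [k [[w' [sw e]] mk]] := exists_min (ex_intro (fun k => exists w', size w' = k /\ equivw w w') _ (ex_intro _ w (conj erefl (fun v => erefl)))).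
exists w'; split => // w'' e'; rewrite sw; apply: mk; exists w''; split => //.
exact: equivw_trans e e'.
Qed.

Lemma Iword_cons (s t i : 'I_n) u : Iword s t (i :: u) = ((i == s) || (i == t)) && Iword s t u.
Proof. by []. Qed.

Lemma Ireduced_cons s t i u : Iword s t (i :: u) -> Ireduced s t (i :: u) -> Ireduced s t u.
Proof.
move=> /andP [hi _] h u' Iu' e.
have := h (i :: u'); rewrite Iword_cons hi Iu' => /(_ isT).
have e' : equivw (i :: u) (i :: u') by move=> v; rewrite !act_cons e.
by move/(_ e').
Qed.

Lemma Iword_alt (s t : 'I_n) k : Iword s t (alt s t k).
Proof. by apply/allP => i /alt_mem. Qed.

Lemma alt_char s t u : s != t -> Iword s t u -> Ireduced s t u -> last t u != s ->
  u = alt s t (size u).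
Proof.
move=> st; elim: u => [//|a u IH] Iu Ru hl.
have Iu' : Iword s t u by case/andP: Iu.
have ha : (a == s) || (a == t) by case/andP: Iu.
have Ru' := Ireduced_cons Iu Ru.
have hl' : last t u != s.
  by case: u {IH Iu Ru Iu' Ru'} hl => [|b u] //= _; rewrite eq_sym.
have E := IH Iu' Ru' hl'.
rewrite [RHS]/=; congr (_ :: _) => //.
move: E Ru hl; case: (size u) => [|k] E Ru hl.
  rewrite E /= in hl; case/orP: ha => /eqP e //; by rewrite e eqxx in hl.
rewrite E [alt s t k.+1]/= in Ru *.
set h := if odd k then s else t.
have ah : a != h.
  apply/eqP => ah; rewrite ah in Ru.
  have := Ru (alt s t k) (Iword_alt _ _ _) (equivw_cc _ _).
  by rewrite /= size_alt => /ltnW; rewrite ltnn.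
move: ah; rewrite /h /=; case: (odd k) => /=; case/orP: ha => /eqP -> //; by rewrite eqxx.
Qed.

End Length.

Section PT.
Variables (R : realType) (n : nat) (M : 'M[R]_n).
Hypothesis HM : egcm M.
Local Notation al := (alpha R).
Local Notation act := (act M).
Local Notation equivw := (equivw M).
Local Notation reduced := (reduced M).
Local Notation Ireduced := (Ireduced M).
Local Notation lenup := (lenup M).
Let Md := Mdiag HM.

Lemma Iword_cat (s t : 'I_n) p q : Iword s t (p ++ q) = Iword s t p && Iword s t q.
Proof. exact: all_cat. Qed.

Lemma Iword_rcons (s t : 'I_n) p i : Iword s t (rcons p i) = Iword s t p && ((i == s) || (i == t)).
Proof. by rewrite -cats1 Iword_cat /Iword /= andbT. Qed.

Lemma dihedral s t u : s != t -> Iword s t u -> Ireduced s t u ->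
  (forall u', Iword s t u' -> equivw (rcons u s) u' -> (size u <= size u')%N) ->
  u = alt s t (size u) /\ (coxm M s t = 0%N \/ (size u < coxm M s t)%N).
Proof.
move=> st Iu Ru Hu.
have hl : last t u != s.
  move: Iu Ru Hu; case/lastP: u => [|u1 a] Iu Ru Hu; first by rewrite /= eq_sym.
  rewrite last_rcons; apply/eqP => as_; rewrite as_ in Iu Hu.
  move: Iu; rewrite Iword_rcons => /andP [Iu1 _].
  have := Hu u1 Iu1 (equivw_rr HM _ _); rewrite size_rcons.
  by rewrite ltnn.
have E := alt_char HM st Iu Ru hl; split => //.
have : coxm M s t = 0%N \/ (2 <= coxm M s t)%N.
  by case: (coxm_cases HM st) => [[-> _]|[-> _]|[c3 _]]; [left|right|right; apply: ltnW].
case=> [->|m2]; [by left | right].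
rewrite ltnNge; apply/negP => mu.
have br := braid HM st m2.
set m := coxm M s t in m2 mu br *.
have [p Ep] := alt_split s t (size u - m) m.
rewrite subnK // in Ep.
have m1 : m = m.-1.+1 by rewrite prednK // ltnW.
have am : alt t s m = rcons (alt s t m.-1) s by rewrite {1}m1 alt_rcons.
have eq1 : equivw (rcons u s) (p ++ alt s t m.-1).
  rewrite E Ep rcons_cat; apply: equivw_cat => [v //|].
  by move=> v; rewrite act_rcons br am act_rcons reflK.
have Ip : Iword s t p by move: Iu; rewrite E Ep Iword_cat => /andP [].
have := Hu _ _ eq1; rewrite Iword_cat Ip Iword_alt => /(_ isT).
have su : size u = (size p + m)%N by rewrite E Ep size_cat size_alt.
rewrite su size_cat size_alt {1}m1 addnS ltnNge.
by rewrite leqnn.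
Qed.

Lemma decomp w s t : s != t -> reduced w -> lenup w s -> (exists w1, w = rcons w1 t) ->
  exists v k, [/\ (size v < size w)%N, reduced v, lenup v s & lenup v t] /\
   [/\ equivw w (v ++ alt s t k), (0 < k)%N & (coxm M s t = 0%N \/ (k < coxm M s t)%N)].
Proof.
move=> st Rw Lw [w1 Ew].
pose P k := exists v u, [/\ size v = k, Iword s t u, equivw w (v ++ u)
   & (size v + size u = size w)%N].
have P1 : P (size w1).
  exists w1, [:: t]; split => //; first by rewrite /Iword /= eqxx orbT.
    by rewrite Ew cats1.
  by rewrite Ew size_rcons addn1.
have [k [[v [u [sv Iu Ew' su]]] mk]] := exists_min (ex_intro P _ P1).
have kw : (k <= size w1)%N := mk _ P1.
have sw : size w = (size w1).+1 by rewrite Ew size_rcons.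
have svw : (size v < size w)%N by lia.
have Rv : reduced v.
  move=> v' e; rewrite leqNgt; apply/negP => lt.
  have := Rw (v' ++ u) (equivw_trans Ew' (equivw_cat e (fun _ => erefl))).
  rewrite size_cat; lia.
have Lv : forall a, (a == s) || (a == t) -> lenup v a.
  move=> a ha v' e; rewrite leqNgt; apply/negP => lt.
  have e2 : equivw w (v' ++ a :: u).
    apply: (equivw_trans Ew') => x.
    by rewrite !act_cat act_cons -e act_rcons reflK.
  have := Rw _ e2; rewrite size_cat /= => h.
  have : P (size v').
    exists v', (a :: u); split => //; first by rewrite Iword_cons ha Iu.
    by rewrite /=; lia.
  move/mk; lia.
have Ru : Ireduced s t u.
  move=> u' Iu' e; rewrite leqNgt; apply/negP => lt.
  have := Rw (v ++ u') (equivw_trans Ew' (equivw_cat (fun _ => erefl) e)).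
  rewrite size_cat; lia.
have Hu : forall u', Iword s t u' -> equivw (rcons u s) u' -> (size u <= size u')%N.
  move=> u' _ e; rewrite leqNgt; apply/negP => lt.
  have e2 : equivw (rcons w s) (v ++ u').
    by move=> x; rewrite act_rcons Ew' !act_cat -e act_rcons.
  have := Lw _ e2; rewrite size_cat; lia.
have [Eu bd] := dihedral st Iu Ru Hu.
exists v, (size u); split; split => //.
- by apply: Lv; rewrite eqxx.
- by apply: Lv; rewrite eqxx orbT.
- by rewrite -Eu.
- lia.
Qed.

Lemma posv_alpha (i : 'I_n) : posv (al i).
Proof. by move=> j; rewrite alphaE ler0n. Qed.

Lemma posv_comb (A B : 'rV[R]_n) p q : posv A -> posv B -> 0 <= p -> 0 <= q -> posv (p *: A + q *: B).
Proof.
move=> hA hB hp hq j; rewrite !mxE.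
by apply: addr_ge0; apply: mulr_ge0.
Qed.

Lemma beta_nonneg s t k : s != t -> (coxm M s t = 0%N \/ (k < coxm M s t)%N) ->
  exists p q, [/\ 0 <= p, 0 <= q & act (alt s t k) (al s) = p *: al s + q *: al t].
Proof.
move=> st bd; rewrite (@beta_formula R n M Md) //.
have hb := b_ge0 HM st.
have h1 : 0 <= V (- M s t * - M t s) k.
  by apply: (Vnn HM st); case: bd => [->|h]; [left|right; apply: ltnW].
have h2 : 0 <= V (- M s t * - M t s) k.+1.
  by apply: (Vnn HM st); case: bd => [->|h]; [left|right].
case: (odd k); (eexists; eexists; split; last by reflexivity); by rewrite // mulr_ge0.
Qed.

Lemma PT N : forall w s, (size w <= N)%N -> reduced w -> lenup w s -> posv (act w (al s)).
Proof.
elim: N => [|N IH] w s; case/lastP: w => [|w1 t]; rewrite ?size_rcons // => sN Rw Lw.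
- exact: posv_alpha.
- exact: posv_alpha.
have ts : t != s.
  apply/eqP => e; move: (Lw w1); rewrite e => /(_ (equivw_rr HM _ _)).
  by rewrite size_rcons ltnn.
have st : s != t by rewrite eq_sym.
have [v [k [[svw Rv Lvs Lvt] [Ew kpos bd]]]] := decomp st Rw Lw (ex_intro _ w1 erefl).
rewrite size_rcons in svw.
have [p [q [hp hq Eb]]] := beta_nonneg st bd.
rewrite Ew act_cat Eb act_lin actZ.
by apply: posv_comb => //; apply: IH => //; lia.
Qed.

Lemma PT_neg w s : reduced w -> ~ lenup w s ->
  exists w'', [/\ reduced w'', lenup w'' s & act w (al s) = - act w'' (al s)].
Proof.
move=> Rw /existsNP [w' /not_implyP [e /negP]]; rewrite -ltnNge => lt.
have [w'' [e' Rw'']] := reduced_exists M w'.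
exists w''; split => //.
  move=> w3 e3; have e4 : equivw w w3.
    by move=> x; rewrite -e3 act_rcons -e' -e act_rcons reflK.
  have := Rw _ e4; have := Rw'' _ (equivw_sym e'); lia.
rewrite -e' -e act_rcons refl_self //; have := actZ M w (-1) (al s); rewrite !scaleN1r => ->; by rewrite opprK.
Qed.

End PT.

Section PathB.
Variables (R : realType) (n : nat) (M : 'M[R]_n).
Hypothesis HM : egcm M.
Local Notation al := (alpha R).
Local Notation act := (act M).
Local Notation equivw := (equivw M).
Local Notation reduced := (reduced M).
Local Notation lenup := (lenup M).
Let Md := Mdiag HM.

Lemma beta_classify s t k : s != t -> (0 < k)%N ->
  (coxm M s t = 0%N \/ (k < coxm M s t)%N) ->
  exists c1 c2, act (alt s t k) (al s) = c1 *: al s + c2 *: al t /\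
   [\/ (0 < c1 /\ 0 < c2), (c1 = 1 /\ c2 = 0) | [/\ odd_adj M s t, c1 = 0 & c2 = Kc M t s]].
Proof.
move=> st k0 bd; rewrite (@beta_formula R n M Md) //.
set x := - M s t * - M t s; set b := - M t s.
have pos2 : (coxm M s t = 0%N \/ (k.+1 < coxm M s t)%N) -> 0 < V x k /\ 0 < V x k.+1 /\ 0 < b.
  move=> h.
  have hk : coxm M s t = 0%N \/ (k < coxm M s t)%N.
    by case: h => [->|h]; [left|right; apply: ltnW].
  have q1 : 0 < V x k by apply: (Vpos HM st).
  have q2 : 0 < V x k.+1 by apply: (Vpos HM st).
  have q3 : 0 < b.
    apply: (b_gt0 HM st); case: h => [->//|h]; apply/eqP => m2; rewrite m2 in h.
    by move: k0 h; clear; case: k => [|[]].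
  by [].
case: (coxm_cases HM st) => [[c0 _]|[c2 [h1 h2]]|[c3 _]].
- have [p1 [p2 p3]] := pos2 (or_introl c0).
  by case: (odd k); (eexists; eexists; split; first reflexivity); constructor 1; split => //; apply: mulr_gt0.
- have k1 : k = 1%N by case: bd; rewrite c2 // => h; lia.
  rewrite k1 /=; eexists; eexists; split; first reflexivity.
  by constructor 2; split => //; rewrite /b h2 oppr0 mul0r.
- case: bd => [c0|km]; first by move: c3; rewrite c0.
  move: km; rewrite leq_eqVlt => /orP [/eqP km|km].
  + have m2 : (2 <= coxm M s t)%N by apply: ltnW.
    have [z1 z2 z3 z4] := Vm_zero HM st m2.
    have ek : k = (coxm M s t).-1 by rewrite -km.
    case ok: (odd k); (eexists; eexists; split; first reflexivity).
    * constructor 2; split.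
        have m0 : (0 < coxm M s t)%N by lia.
        by rewrite ek Vm1_even //; move: ok; rewrite ek odd_pred.
      by rewrite km z2.
    * have om : odd (coxm M s t) by rewrite -km /= ok.
      constructor 3; split => //.
        by rewrite /odd_adj st om.
        by rewrite km z4.
      by rewrite ek (Vm1_odd HM st om).
  + have [p1 [p2 p3]] := pos2 (or_intror km).
    by case: (odd k); (eexists; eexists; split; first reflexivity); constructor 1; split => //; apply: mulr_gt0.
Qed.


Lemma alpha_scale (y x : 'I_n) (K : R) : al y = K *: al x -> x = y /\ K = 1.
Proof.
move/rowP/(_ y); rewrite [in RHS]mxE !alphaE eqxx.
case: (eqVneq x y) => [->|xy]; first by rewrite mulr1.
by rewrite mulr0 => /eqP; rewrite oner_eq0.
Qed.

Lemma coordE (p q : R) (A B : 'rV[R]_n) j : (p *: A + q *: B) 0 j = p * A 0 j + q * B 0 j.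
Proof. by rewrite !mxE. Qed.

Lemma coordZa (K : R) (x j : 'I_n) : (K *: al x) 0 j = K * (x == j)%:R.
Proof. by rewrite mxE alphaE. Qed.

Lemma coordBa (p q : R) (a b j : 'I_n) :
  (p *: al a - q *: al b) 0 j = p * (a == j)%:R - q * (b == j)%:R.
Proof. by rewrite [LHS]mxE coordZa [X in _ + X]mxE coordZa. Qed.

Lemma actB w u v : act w (u - v) = act w u - act w v.
Proof. by rewrite actD -scaleN1r actZ scaleN1r. Qed.

Lemma two_pos v y z x (K p q : R) : y != z -> posv (act v (al y)) -> posv (act v (al z)) ->
  0 < p -> 0 < q -> p *: act v (al y) + q *: act v (al z) = K *: al x -> False.
Proof.
move=> yz PA PB p0 q0 E.
set A := act v (al y) in PA E; set B := act v (al z) in PB E.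
have zero : forall j, j != x -> A 0 j = 0 /\ B 0 j = 0.
  move=> j jx; move/rowP/(_ j): E; rewrite coordE coordZa eq_sym (negPf jx) mulr0.
  have a0 := PA j; have b0 := PB j.
  have a1 : 0 <= p * A 0 j by rewrite mulr_ge0 // ltW.
  have b1 : 0 <= q * B 0 j by rewrite mulr_ge0 // ltW.
  move=> e; have pa : p * A 0 j = 0 by lra.
  have qb : q * B 0 j = 0 by lra.
  move/eqP: pa; rewrite mulf_eq0 (gt_eqF p0) => /eqP pa.
  by move/eqP: qb; rewrite mulf_eq0 (gt_eqF q0) => /eqP qb.
have EA : A = A 0 x *: al x.
  apply/rowP => j; rewrite coordZa; case: (eqVneq x j) => [->|xj].
    by rewrite mulr1.
  by rewrite mulr0 (proj1 (zero j _)) // eq_sym.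
have EB : B = B 0 x *: al x.
  apply/rowP => j; rewrite coordZa; case: (eqVneq x j) => [->|xj].
    by rewrite mulr1.
  by rewrite mulr0 (proj2 (zero j _)) // eq_sym.
have : act v (B 0 x *: al y - A 0 x *: al z) = act v 0.
  rewrite actB !actZ act0 -/A -/B.
  have -> : B 0 x *: A - A 0 x *: B = B 0 x *: (A 0 x *: al x) - A 0 x *: (B 0 x *: al x).
    by rewrite -EA -EB.
  by rewrite !scalerA mulrC subrr.
move/(act_inj Md)/rowP/(_ z); rewrite coordBa [RHS]mxE eqxx (negPf yz) mulr0 mulr1 sub0r.
move/eqP; rewrite oppr_eq0 => /eqP Ax.
have : A = 0 by rewrite EA Ax scale0r.
move=> A0; have h : al y != 0 by apply: alpha_neq0.
by move: (act_neq0 Md v h); rewrite -/A A0 eqxx.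
Qed.

Lemma Kc_pos i j : odd_adj M i j -> 0 < Kc M j i.
Proof.
case/andP=> ij om; case: (coxm_cases HM ij) => [[c0 _]|[c2 _]|[c3 [_ [_ h]]]].
- by move: om; rewrite c0.
- by move: om; rewrite c2.
have cg := @c_gt0 R _ c3.
by rewrite /Kc divr_gt0 // ?oppr_gt0 // mulr_gt0.
Qed.

Lemma word_step i j : odd_adj M i j ->
  act (alt i j (coxm M i j).-1) (al i) = Kc M j i *: al j.
Proof.
case/andP=> ij om.
have m3 : (3 <= coxm M i j)%N.
  by case: (coxm_cases HM ij) => [[c0 _]|[c2 _]|[c3 _]] //; [move: om; rewrite c0 | move: om; rewrite c2].
have m2 : (2 <= coxm M i j)%N by apply: ltnW.
have m0 : (0 < coxm M i j)%N by lia.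
have [z1 z2 z3 z4] := Vm_zero HM ij m2.
rewrite (@beta_formula R n M Md) // odd_pred // om /= prednK // (z4 om) scale0r add0r.
by rewrite (Vm1_odd HM ij om).
Qed.

Lemma oa_prod_nil x : oa_prod M x [::] = 1.
Proof. by rewrite /oa_prod /= big_nil. Qed.

Lemma oa_prod_cons x y s : oa_prod M x (y :: s) = Kc M y x * oa_prod M y s.
Proof. by rewrite /oa_prod /= big_cons. Qed.

Lemma oa_prod_cat x s1 s2 : oa_prod M x (s1 ++ s2) = oa_prod M x s1 * oa_prod M (last x s1) s2.
Proof.
elim: s1 x => [|y s1 IH] x /=; first by rewrite oa_prod_nil mul1r.
by rewrite !oa_prod_cons IH mulrA.
Qed.

Lemma oa_path_cons x y s : oa_path M x (y :: s) = odd_adj M x y && oa_path M y s.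
Proof. by []. Qed.

Lemma oa_path_cat x s1 s2 : oa_path M x (s1 ++ s2) = oa_path M x s1 && oa_path M (last x s1) s2.
Proof. exact: cat_path. Qed.

Lemma oa_prod_pos x s : oa_path M x s -> 0 < oa_prod M x s.
Proof.
elim: s x => [|y s IH] x; first by rewrite oa_prod_nil ltr01.
rewrite oa_path_cons oa_prod_cons => /andP [h1 h2].
by rewrite mulr_gt0 ?IH ?Kc_pos.
Qed.

Lemma path_word x s : oa_path M x s ->
  exists w, act w (al x) = oa_prod M x s *: al (last x s).
Proof.
elim: s x => [|y s IH] x.
  by move=> _; exists [::]; rewrite oa_prod_nil scale1r.
rewrite oa_path_cons => /andP [h1 /IH [w E]].
exists (w ++ alt x y (coxm M x y).-1).
by rewrite act_cat word_step // actZ E scalerA oa_prod_cons.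
Qed.

End PathB.

Section PathB2.
Variables (R : realType) (n : nat) (M : 'M[R]_n).
Hypothesis HM : egcm M.
Local Notation al := (alpha R).
Local Notation act := (act M).
Local Notation equivw := (equivw M).
Local Notation reduced := (reduced M).
Local Notation lenup := (lenup M).
Let Md := Mdiag HM.

Lemma pathB N : forall w y x (K : R), (size w <= N)%N -> reduced w ->
  act w (al y) = K *: al x -> 0 < K ->
  exists s, [/\ oa_path M y s, last y s = x & oa_prod M y s = K].
Proof.
elim: N => [|N IH] w y x K; case/lastP: w => [|w1 z]; rewrite ?size_rcons // => sN Rw E K0.
- have [-> ->] := alpha_scale E; exists [::]; split => //; exact: oa_prod_nil.
- have [-> ->] := alpha_scale E; exists [::]; split => //; exact: oa_prod_nil.
have Lw : lenup (rcons w1 z) y.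
  apply: contrapT => nL.
  have [w'' [R'' L'' E'']] := PT_neg HM Rw nL.
  have := PT HM (leqnn _) R'' L'' x.
  rewrite -[act w'' _]opprK -E'' E mxE coordZa eqxx mulr1 oppr_ge0 => h.
  by move: h; rewrite leNgt K0.
have zy : z != y.
  apply/eqP => e; move: (Lw w1); rewrite e => /(_ (equivw_rr HM _ _)).
  by rewrite size_rcons ltnn.
have yz : y != z by rewrite eq_sym.
have [v [k [[svw Rv Lvy Lvz] [Ew kpos bd]]]] := decomp HM yz Rw Lw (ex_intro _ w1 erefl).
rewrite size_rcons in svw.
have [c1 [c2 [Eb cases]]] := beta_classify HM yz kpos bd.
rewrite Ew act_cat Eb act_lin actZ in E.
have PA := PT HM (leqnn _) Rv Lvy.
have PB := PT HM (leqnn _) Rv Lvz.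
have svN : (size v <= N)%N by lia.
case: cases => [[p1 p2]|[e1 e2]|[oa e1 e2]]; rewrite ?e1 ?e2 in E.
- by exfalso; apply: (two_pos HM yz PA PB p1 p2 E).
- rewrite scale1r scale0r addr0 in E.
  exact: IH svN Rv E K0.
- rewrite scale0r add0r in E.
  have kp := Kc_pos HM oa.
  have E2 : act v (al z) = (K / Kc M z y) *: al x.
    by rewrite [K / _]mulrC -scalerA -E scalerA mulVf ?scale1r // gt_eqF.
  have [s [ps ls prs]] := IH v z x (K / Kc M z y) svN Rv E2 (divr_gt0 K0 kp).
  exists (z :: s); split => //.
    by rewrite oa_path_cons oa ps.
  by rewrite oa_prod_cons prs mulrC divfK // gt_eqF.
Qed.

End PathB2.

Section Final.
Variables (R : realType) (n : nat) (M : 'M[R]_n) (J : {set 'I_n}).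
Hypothesis HM : egcm M.
Hypothesis HJ : oa_component M J.
Local Notation al := (alpha R).
Local Notation act := (act M).
Local Notation conn := (oa_connected M).
Let Md := Mdiag HM.

Lemma conn_refl x : conn x x.
Proof. by exists [::]. Qed.

Lemma conn_trans x y z : conn x y -> conn y z -> conn x z.
Proof.
move=> [s1 [p1 l1]] [s2 [p2 l2]]; exists (s1 ++ s2); split.
  by rewrite /oa_path cat_path -/(oa_path _ _ _) p1 l1.
by rewrite last_cat l1.
Qed.

Lemma conn_in x z : x \in J -> conn x z -> conn z x -> z \in J.
Proof.
case: HJ => _ pw mx xJ cxz czx.
have sub : J \subset z |: J by exact: finset.subsetU1 z J.
have pw' : oa_pairwise M (z |: J).
  move=> a b; rewrite !finset.in_setU1 => /orP [/eqP ->|aJ] /orP [/eqP ->|bJ].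
  - exact: conn_refl.
  - exact: conn_trans czx (pw _ _ xJ bJ).
  - exact: conn_trans (pw _ _ aJ xJ) cxz.
  - exact: pw.
by rewrite -(mx _ sub pw') finset.setU11.
Qed.

Lemma path_nodes y s : oa_path M y s -> forall z, z \in y :: s -> conn y z /\ conn z (last y s).
Proof.
elim: s y => [|a s IH] y.
  by move=> _ z; rewrite mem_seq1 => /eqP ->; split; exact: conn_refl.
rewrite oa_path_cons => /andP [ya ps] z; rewrite in_cons => /orP [/eqP ->|zin].
  split; first exact: conn_refl.
  by exists (a :: s); split => //; rewrite oa_path_cons ya ps.
have [h1 h2] := IH a ps z zin.
split => //; apply: conn_trans h1; exists [:: a]; split => //.
by rewrite /oa_path /= ya.
Qed.

Lemma path_inJ y s : y \in J -> last y s \in J -> oa_path M y s -> all (mem J) (y :: s).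
Proof.
case: HJ => _ pw _ yJ xJ ps; apply/allP => z hz.
have [h1 h2] := path_nodes ps hz.
apply: (conn_in xJ) => //.
exact: conn_trans (pw _ _ xJ yJ) h1.
Qed.

Hypothesis U : unital_oa_cyclic M J.

Lemma prod_unique y x s1 s2 : y \in J -> x \in J ->
  oa_path M y s1 -> last y s1 = x -> oa_path M y s2 -> last y s2 = x ->
  oa_prod M y s1 = oa_prod M y s2.
Proof.
case: HJ => _ pw _ yJ xJ p1 l1 p2 l2.
have [q [pq lq]] := pw _ _ xJ yJ.
have cyc : forall s, oa_path M y s -> last y s = x -> oa_prod M y s * oa_prod M x q = 1.
  move=> s ps ls; rewrite -ls -oa_prod_cat; apply: U.
  - by rewrite oa_path_cat ps ls pq.
  - by rewrite last_cat ls lq.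
  - by apply: path_inJ => //; [rewrite last_cat ls lq | rewrite oa_path_cat ps ls pq].
have qp := oa_prod_pos HM pq.
apply: (mulIf (lt0r_neq0 qp)); by rewrite cyc // cyc.
Qed.

End Final.

Section Final2.
Variables (R : realType) (n : nat) (M : 'M[R]_n) (J : {set 'I_n}).
Hypothesis HM : egcm M.
Hypothesis HJ : oa_component M J.
Local Notation al := (alpha R).
Local Notation act := (act M).
Local Notation conn := (oa_connected M).
Let Md := Mdiag HM.

Definition cprod (y x : 'I_n) : R :=
  match pselect (exists s, oa_path M y s /\ last y s = x) with
  | left h => oa_prod M y (projT1 (cid h))
  | right _ => 0 end.

Lemma root_act w (y : 'I_n) : foldr (refl M) (al y) w = act w (al y).
Proof. by []. Qed.

Lemma reverse_word w (y x : 'I_n) (K : R) : act w (al y) = K *: al x -> K != 0 ->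
  act (rev w) (al x) = K^-1 *: al y.
Proof.
move=> E K0; have := act_revK Md w (al y); rewrite E actZ => h.
by rewrite -h scalerA mulVf ?scale1r.
Qed.

Lemma word_path w (y x : 'I_n) (K : R) : act w (al y) = K *: al x -> 0 < K ->
  exists s, [/\ oa_path M y s, last y s = x & oa_prod M y s = K].
Proof.
move=> E K0; have [w' [e Rw']] := reduced_exists M w.
apply: (pathB HM (leqnn _) Rw') => //; by rewrite -e.
Qed.

Lemma coord_x (K : R) (x : 'I_n) : (K *: al x) 0 x = K.
Proof. by rewrite coordZa eqxx mulr1. Qed.

Lemma ray_mem (x : 'I_n) v : ray_roots M x v ->
  exists K, [/\ 0 < K, v = K *: al x & exists w y, act w (al y) = v].
Proof.
move=> [[K _ EK] [[w [y Ev]] pv]].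
have Kge : 0 <= K by have := pv x; rewrite -EK coord_x.
have Kne : K != 0.
  apply/eqP => K0; have : act w (al y) != 0 by apply: act_neq0 => //; apply: alpha_neq0.
  by rewrite -root_act -Ev -EK K0 scale0r eqxx.
exists K; split => //; first by rewrite lt_neqAle eq_sym Kne.
by exists w, y; rewrite -root_act -Ev.
Qed.

Section Unital.
Hypothesis U : unital_oa_cyclic M J.

Lemma cprodE y x s : y \in J -> x \in J -> oa_path M y s -> last y s = x ->
  cprod y x = oa_prod M y s.
Proof.
move=> yJ xJ ps ls; rewrite /cprod; case: pselect => [h|h].
  case: (cid h) => s' [p' l'] /=; exact: (prod_unique HM HJ U yJ xJ).
by exfalso; apply: h; exists s.
Qed.

Lemma ray_eq x : x \in J ->
  ray_roots M x = (fun y => cprod y x *: al x) @` [set y | y \in J].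
Proof.
move=> xJ; case: (HJ) => _ pw _.
apply/seteqP; split => v.
- move=> /ray_mem [K [K0 Ev [w [y Ew]]]].
  rewrite Ev in Ew.
  have [s [ps ls prs]] := word_path Ew K0.
  have K0' : 0 < K^-1 by rewrite invr_gt0.
  have [s' [ps' ls' _]] := word_path (reverse_word Ew (lt0r_neq0 K0)) K0'.
  have yJ : y \in J.
    by apply: (conn_in HJ xJ); [exists s' | exists s].
  exists y => //; rewrite Ev (cprodE yJ xJ ps ls) prs //.
- move=> [y yJ <-].
  have [s [ps ls]] := pw _ _ yJ xJ.
  have [w Ew] := path_word HM ps.
  have pp := oa_prod_pos HM ps.
  rewrite (cprodE yJ xJ ps ls); split.
    by exists (oa_prod M y s).
  split; first by exists w, y; rewrite root_act Ew ls.
  by move=> j; rewrite coordZa mulr_ge0 // ?ler0n // ltW.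
Qed.

Lemma ray_finite x : x \in J -> finite_set (ray_roots M x).
Proof. by move=> xJ; rewrite ray_eq //; apply: finite_image; apply: finite_finset. Qed.

Lemma cprod_pos y x : y \in J -> x \in J -> 0 < cprod y x.
Proof.
case: (HJ) => _ pw _ yJ xJ; have [s [ps ls]] := pw _ _ yJ xJ.
by rewrite (cprodE yJ xJ ps ls) oa_prod_pos.
Qed.

Lemma cprod_mul y x z : y \in J -> x \in J -> z \in J -> cprod y z = cprod y x * cprod x z.
Proof.
case: (HJ) => _ pw _ yJ xJ zJ.
have [s1 [p1 l1]] := pw _ _ yJ xJ.
have [s2 [p2 l2]] := pw _ _ xJ zJ.
rewrite (cprodE yJ xJ p1 l1) (cprodE xJ zJ p2 l2) -l1 -oa_prod_cat.
apply: cprodE => //; first by rewrite oa_path_cat p1 l1 p2.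
by rewrite last_cat l1.
Qed.

Lemma ray_card x x' : x \in J -> x' \in J -> (ray_roots M x #= ray_roots M x')%card.
Proof.
move=> xJ x'J.
pose g (v : 'rV[R]_n) := (cprod x x' * v 0 x) *: al x'.
have E : ray_roots M x' = g @` ray_roots M x.
  rewrite !ray_eq //; apply/seteqP; split => v.
    move=> [y yJ <-]; exists (cprod y x *: al x); first by exists y.
    by rewrite /g coord_x (cprod_mul yJ xJ x'J) mulrC.
  move=> [_ [y yJ <-] <-]; exists y => //.
  by rewrite /g coord_x (cprod_mul yJ xJ x'J) mulrC.
rewrite E card_esym //; apply: inj_card_eq => v1 v2.
rewrite !inE => /ray_mem [K1 [_ E1 _]] /ray_mem [K2 [_ E2 _]].
rewrite /g E1 E2 !coord_x => /(congr1 (fun v : 'rV[R]_n => v 0 x')); rewrite !coord_x.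
by move/(mulfI (lt0r_neq0 (cprod_pos xJ x'J))) => ->.
Qed.

End Unital.
End Final2.

Section Final3.
Variables (R : realType) (n : nat) (M : 'M[R]_n) (J : {set 'I_n}).
Hypothesis HM : egcm M.
Hypothesis HJ : oa_component M J.
Local Notation al := (alpha R).
Local Notation act := (act M).
Let Md := Mdiag HM.

Lemma nonunital_infinite : ~ unital_oa_cyclic M J ->
  forall x, x \in J -> ~ finite_set (ray_roots M x).
Proof.
move=> nU x xJ fin; apply: nU => x0 s ps ls aJ; apply: contrapT => c1.
case: (HJ) => _ pw _.
have x0J : x0 \in J by case/andP: aJ.
have [p [pp lp]] := pw _ _ x0J xJ.
have [Wc Ec] := path_word HM ps; rewrite ls in Ec.
have [Wp Ep] := path_word HM pp; rewrite lp in Ep.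
set c := oa_prod M x0 s in Ec c1; set d := oa_prod M x0 p in Ep.
have c0 : 0 < c by exact: (oa_prod_pos HM ps).
have d0 : 0 < d by exact: (oa_prod_pos HM pp).
have cn1 : c != 1 by apply/eqP.
have Epow : forall k, act (flatten (nseq k Wc)) (al x0) = c ^+ k *: al x0.
  elim => [|k IH]; first by rewrite /= expr0 scale1r.
  by rewrite /= act_cat IH actZ Ec scalerA -exprSr.
pose F k := (d * c ^+ k) *: al x.
have Fin : forall k, ray_roots M x (F k).
  move=> k; split; first by exists (d * c ^+ k).
  split.
    exists (Wp ++ flatten (nseq k Wc)), x0.
    by rewrite root_act act_cat Epow actZ Ep scalerA mulrC.
  by move=> j; rewrite /F coordZa mulr_ge0 // ?ler0n // ltW // mulr_gt0 // exprn_gt0.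
have Finj : injective F.
  move=> i j /(congr1 (fun v : 'rV[R]_n => v 0 x)); rewrite /F !coord_x.
  by move/(mulfI (lt0r_neq0 d0)); apply: ieexprIn.
have : finite_set (F @` [set: nat]).
  by apply: sub_finite_set fin => v [k _ <-].
rewrite (eq_finite_set (inj_card_eq _)); first exact: infinite_nat.
by move=> i j _ _; apply: Finj.
Qed.

End Final3.

Theorem proposition4p8 (R : realType) (n : nat) (M : 'M[R]_n) (J : {set 'I_n}) :
  egcm M -> oa_component M J ->
  [/\ (unital_oa_cyclic M J <-> exists2 x, x \in J & finite_set (ray_roots M x)),
      (unital_oa_cyclic M J <-> forall x, x \in J -> finite_set (ray_roots M x))
    & (unital_oa_cyclic M J ->
       forall x y, x \in J -> y \in J -> (ray_roots M x #= ray_roots M y)%card)].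
Proof.
move=> HM HJ.
have ne : exists x, x \in J by case: (HJ) => /finset.set0Pn.
have bwd : forall x, x \in J -> finite_set (ray_roots M x) -> unital_oa_cyclic M J.
  move=> x xJ fin; apply: contrapT => nU; exact: (nonunital_infinite HM HJ nU xJ fin).
split.
- split => [U|[x xJ fin]]; last exact: bwd xJ fin.
  by have [x xJ] := ne; exists x => //; apply: (ray_finite HM HJ U).
- split => [U x xJ|H]; first exact: (ray_finite HM HJ U).
  by have [x xJ] := ne; exact: bwd xJ (H x xJ).
- by move=> U x y xJ yJ; apply: (ray_card HM HJ U).
Qed.
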